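(* Let $r>2$, fix $1\le i_-\le r-1$ and put $i_+=i_-+1$. Let $\phi^e_v:H^e_r\to H^e_{r+1}$ be the embedding $T_i\mapsto \check T_i$ ($1\le i<i_-$), $T_{i_-}\mapsto\check T_{i_-}\check T_{i_+}\check T_{i_-}^{-1}$, $T_i\mapsto\check T_{i+1}$ ($i_+\le i\le r$), $T_\rho\mapsto\check T_{i_+}^{-1}\check T_\rho$, and let $\phi^{BL}_v=\varphi_{r+1}\circ\phi^e_v\circ\varphi_r^{-1}:H^{BL}_r\to H^{BL}_{r+1}$. Writing $\check T_i,\check X_j$ for the generators of $H^{BL}_{r+1}$, we have \[ \phi^{BL}_v(T_i)=\begin{cases}\check T_i & 1\le i<i_-,\\ \check T_{i_-}\check T_{i_+}\check T_{i_-}^{-1} & i=i_-,\\ \check T_{i+1} & i_+\le i\le r-1,\end{cases} \] \[ \phi^{BL}_v(X_j)=\begin{cases}\check X_j+(v-v^{-1})\,\check X_{i_+}\,\check T_j^{-1}\cdots\check T_{i_--1}^{-1}\check T_{i_-}^{-1}\check T_{i_--1}^{-1}\cdots\check T_j^{-1} & 1\le j\le i_-,\\ \check X_{j+1} & i_+\le j\le r,\end{cases} \] where for $j=i_-$ the product $\check T_j^{-1}\cdots\check T_{i_-}^{-1}\cdots\check T_j^{-1}$ means $\check T_{i_-}^{-1}$.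
   Context: $\mathcal A=\mathbb Z[v,v^{-1}]$. For $r>2$, $H^e_r$ is the $\mathcal A$-algebra with generators $T_i$ ($i\in\mathbb Z/r\mathbb Z$), $T_\rho^{\pm1}$ and relations $(T_i-v)(T_i+v^{-1})=0$, $T_iT_{i+1}T_i=T_{i+1}T_iT_{i+1}$, $T_iT_j=T_jT_i$ for $i-j\not\equiv\pm1\pmod r$, $T_\rho T_i=T_{i+1}T_\rho$, $T_\rho T_\rho^{-1}=T_\rho^{-1}T_\rho=1$. $H^{BL}_r$ (Bernstein–Lusztig presentation) is the $\mathcal A$-algebra with generators $T_i$ ($1\le i\le r-1$) and $X_j^{\pm1}$ ($1\le j\le r$) and relations: $(T_i-v)(T_i+v^{-1})=0$; $T_iT_{i+1}T_i=T_{i+1}T_iT_{i+1}$ ($1\le i\le r-2$); $T_iT_j=T_jT_i$ ($|i-j|\ge2$); $X_jX_j^{-1}=X_j^{-1}X_j=1$ and $X_jX_k=X_kX_j$ for all $j,k$; $T_iX_iT_i=X_{i+1}$ ($1\le i\le r-1$); $T_iX_j=X_jT_i$ for $j\ne i,i+1$. It is known that the assignment $T_i\mapsto T_i$ ($1\le i\le r-1$), $T_\rho\mapsto(T_{r-1}T_{r-2}\cdots T_1X_1)^{-1}$ extends to an $\mathcal A$-algebra isomorphism $\varphi_r:H^e_r\to H^{BL}_r$ (and similarly $\varphi_{r+1}$). *)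

(* Defs.v *)
(* Presented algebras are handled through their universal
   property: an identity holds in H^BL_{n} iff it holds for every family of
   elements satisfying the defining relations in every A-algebra
   (A = Z[v,v^-1], i.e. a ring with a central unit v). *)
From mathcomp Require Import all_boot all_algebra.
Set Implicit Arguments. Unset Strict Implicit. Unset Printing Implicit Defensive.
Import GRing.Theory.
Local Open Scope ring_scope.

(* v is a central unit of R: this is exactly an A-algebra structure on R,
   A = Z[v,v^-1]. *)
Definition central_unit (R : unitRingType) (v : R) : Prop :=
  v \is a GRing.unit /\ forall x : R, v * x = x * v.

Definition BL_rel (R : unitRingType) (v : R) (n : nat)
  (T X : nat -> R) : Prop :=
  (forall i, (1 <= i <= n.-1)%N -> (T i - v) * (T i + v^-1) = 0) /\
  (forall i, (1 <= i)%N -> (i <= n - 2)%N ->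
        T i * T i.+1 * T i = T i.+1 * T i * T i.+1) /\
  (forall i j, (1 <= i <= n.-1)%N -> (1 <= j <= n.-1)%N ->
        (i.+2 <= j)%N || (j.+2 <= i)%N -> T i * T j = T j * T i) /\
  (forall j, (1 <= j <= n)%N -> X j \is a GRing.unit) /\
  (forall j k, (1 <= j <= n)%N -> (1 <= k <= n)%N -> X j * X k = X k * X j) /\
  (forall i, (1 <= i <= n.-1)%N -> T i * X i * T i = X i.+1) /\
  (forall i j, (1 <= i <= n.-1)%N -> (1 <= j <= n)%N -> j != i -> j != i.+1 ->
        T i * X j = X j * T i).

(* Given the images t_i (1 <= i <= r-1) and trho of the generators T_i, T_rho
   of H^e_r under an algebra map H^e_r -> R, the image of
   phi_r^{-1}(X_j) in H^BL_r.  From phi_r(T_rho) = (T_{r-1}...T_1 X_1)^{-1}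
   one gets phi_r^{-1}(X_1) = T_1^{-1}...T_{r-1}^{-1} T_rho^{-1}, and
   X_{j+1} = T_j X_j T_j. *)
Fixpoint XofHe (R : unitRingType) (r : nat) (t : nat -> R) (trho : R) (j : nat) : R :=
  match j with
  | 0 => 0
  | 1 => (\prod_(1 <= k < r) (t k)^-1) * trho^-1
  | (j'.+1) as jj => t j' * XofHe r t trho j' * t j'
  end.

(* Image under phi_{r+1} o phi^e_v of T_i (1 <= i <= r-1), in terms of the
   generators Tc, Xc of H^BL_{r+1}  (phi_{r+1} fixes T_1..T_r). *)
Definition phiT (R : unitRingType) (im : nat) (Tc : nat -> R) (i : nat) : R :=
  if (i < im)%N then Tc i
  else if i == im then Tc im * Tc im.+1 * (Tc im)^-1
  else Tc i.+1.

(* Image under phi_{r+1} o phi^e_v of T_rho: phi^e(T_rho) = Tc_{i+}^{-1} Tc_rho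
   and phi_{r+1}(Tc_rho) = (Tc_r ... Tc_1 Xc_1)^{-1}. *)
Definition phiRho (R : unitRingType) (r im : nat) (Tc Xc : nat -> R) : R :=
  (Tc im.+1)^-1 * ((\prod_(1 <= k < r.+1) Tc (r.+1 - k)%N) * Xc 1%N)^-1.

Definition phiBL_X (R : unitRingType) (r im : nat) (Tc Xc : nat -> R) (j : nat) : R :=
  XofHe r (phiT im Tc) (phiRho r im Tc Xc) j.

Definition Wword (R : unitRingType) (im : nat) (Tc : nat -> R) (j : nat) : R :=
  (\prod_(j <= k < im) (Tc k)^-1) * (Tc im)^-1 *
  (\prod_(j <= k < im) (Tc (im + j - 1 - k)%N)^-1).

(* Main.v *)
Require Import Defs.
From mathcomp Require Import all_boot all_algebra.
From mathcomp Require Import zify.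
Import GRing.Theory.
Local Open Scope ring_scope.

Lemma quad (R : unitRingType) (v T : R) : v \is a GRing.unit ->
 (forall x, v * x = x * v) -> (forall x, v^-1 * x = x * v^-1) ->
 (T - v) * (T + v^-1) = 0 -> T * T = 1 + (v - v^-1) * T.
Proof.
move=> Uv Cv Ci E; apply/eqP; rewrite -subr_eq0 -E.
rewrite !mulrBl !mulrDr (mulrV Uv) (Cv T) -(Ci T).
rewrite opprD !opprB !addrA opprD !addrA.
by rewrite -(addrAC (T*T) (v^-1*T) (-1)) (addrAC _ (-1)).
Qed.

Lemma quad_unit (R : unitRingType) (c T : R) : (forall x, c * x = x * c) ->
  T * T = 1 + c * T -> T \is a GRing.unit.
Proof.
move=> Cc E; apply/unitrP; exists (T - c); split.
  by rewrite mulrBl E addrK.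
by rewrite mulrBr E -(Cc T) addrK.
Qed.

Lemma central_inv (R : unitRingType) (v : R) : v \is a GRing.unit ->
  (forall x, v * x = x * v) -> forall x, v^-1 * x = x * v^-1.
Proof.
move=> Uv Cv x.
by rewrite -{1}(mulrK Uv x) -(Cv x) !mulrA mulVr // mul1r.
Qed.

Lemma braid_inv (R : unitRingType) (A B : R) : A \is a GRing.unit ->
  B \is a GRing.unit -> A * B * A = B * A * B ->
  forall x, x * B^-1 * A^-1 * B * A = x * A * B^-1.
Proof.
move=> UA UB E x.
have h : B^-1 * A^-1 * (B * A * B) * B^-1 = A * B^-1.
  by rewrite -E !mulrA divrK // mulVr // mul1r.
rewrite !mulrA mulrK // in h.
by rewrite -[x * A * B^-1]mulrA -h !mulrA.
Qed.

Lemma rev_step (R : unitRingType) (G : nat -> R) (j m : nat) : (j < m)%N ->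
  \prod_(j <= k < m) G (m + j - 1 - k)%N =
  (\prod_(j.+1 <= k < m) G (m + j.+1 - 1 - k)%N) * G j.
Proof.
case: m => [//|m] jm.
rewrite big_nat_recr //= big_add1 /=.
have -> : (m.+1 + j - 1 - m)%N = j by lia.
congr (_ * _); apply: eq_bigr => k _; congr G; lia.
Qed.

Arguments quad {R}.
Arguments quad_unit {R}.
Arguments central_inv {R}.
Arguments braid_inv {R}.
Arguments rev_step {R}.

Theorem mainTheorem9 (R : unitRingType) (v : R) (r im : nat)
  (Tc Xc : nat -> R) :
  (2 < r)%N -> (1 <= im <= r.-1)%N ->
  central_unit v -> BL_rel v r.+1 Tc Xc ->
  (forall i, (1 <= i <= r.-1)%N ->
     phiT im Tc i =
       (if (i < im)%N then Tc i
        else if i == im then Tc im * Tc im.+1 * (Tc im)^-1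
        else Tc i.+1)) /\
  (forall j, (1 <= j <= im)%N ->
     phiBL_X r im Tc Xc j = Xc j + (v - v^-1) * Xc im.+1 * Wword im Tc j) /\
  (forall j, (im.+1 <= j <= r)%N -> phiBL_X r im Tc Xc j = Xc j.+1).
Proof.
move=> r2 /andP[im1 imr] [Uv Cv] [hq [hbr [hcomm [hXu [hXX [hTX hTXc]]]]]].
split; first by move=> i _; rewrite /phiT.
have Ci := central_inv _ Uv Cv.
set c := v - v^-1.
have Cc : forall x, c * x = x * c by move=> x; rewrite /c mulrBl mulrBr Cv Ci.
have Tq : forall i, (1 <= i <= r)%N -> Tc i * Tc i = 1 + c * Tc i.
  by move=> i hi; apply: quad => //; apply: hq.
have TU : forall i, (1 <= i <= r)%N -> Tc i \is a GRing.unit.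
  by move=> i hi; apply: (quad_unit _ _ Cc); apply: Tq.
clearbody c.
set X := phiBL_X r im Tc Xc.
set t := phiT im Tc.
have XS : forall j, (1 <= j)%N -> X j.+1 = t j * X j * t j.
  by case=> [//|j] _.
have tlt : forall k, (k < im)%N -> t k = Tc k.
  by move=> k hk; rewrite /t /phiT hk.
have tim : t im = Tc im * Tc im.+1 * (Tc im)^-1.
  by rewrite /t /phiT ltnn eqxx.
have tgt : forall k, (im < k)%N -> t k = Tc k.+1.
  move=> k hk; rewrite /t /phiT.
  have -> : (k < im)%N = false by lia.
  by have -> : (k == im) = false by lia.
set D := fun k => \prod_(1 <= i < k) (t i)^-1.
set E := fun k => \prod_(1 <= i < k) Tc (k - i)%N.
have ES : forall k, (1 <= k)%N -> E k.+1 = Tc k * E k.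
  move=> k hk; rewrite /E big_ltn // big_add1 /= subn1 /=.
  by congr (_ * _); apply: eq_bigr => i _; rewrite subSS.
have E1 : E 1%N = 1 by rewrite /E big_geq.
have EU : forall k, (k <= r.+1)%N -> E k \is a GRing.unit.
  elim=> [|k IH] hk; first by rewrite /E big_geq // unitr1.
  case: k IH hk => [|k] IH hk; first by rewrite E1 unitr1.
  have U1 : Tc k.+1 \is a GRing.unit by apply: TU; lia.
  have U2 : E k.+1 \is a GRing.unit by apply: IH; lia.
  by rewrite ES // unitrMl.
have DS : forall k, (1 <= k)%N -> D k.+1 = D k * (t k)^-1.
  by move=> k hk; rewrite /D big_nat_recr.
have X1 : X 1%N = D r * E r.+1 * Xc 1%N * Tc im.+1.
  have U1 : Xc 1%N \is a GRing.unit by apply: hXu.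
  have Um : Tc im.+1 \is a GRing.unit by apply: TU; lia.
  rewrite /X /phiBL_X /= -/t -/(D r) /phiRho -/(E r.+1).
  by rewrite invrM ?unitrV ?unitrMl ?EU // !invrK !mulrA.
have loop : forall d, (im.+1 + d <= r)%N ->
    D (im.+1 + d)%N * E (im.+2 + d)%N = D im.+1 * E im.+2.
  elim=> [|d IH] hd; first by rewrite !addn0.
  rewrite !addnS DS // (ES (im.+2 + d)%N) // (tgt (im.+1 + d)%N); last by lia.
  have U : Tc (im.+2 + d)%N \is a GRing.unit by apply: TU; lia.
  rewrite -addSn -!mulrA mulKr //.
  by apply: IH; lia.
have UA : Tc im \is a GRing.unit by apply: TU; lia.
have UB : Tc im.+1 \is a GRing.unit by apply: TU; lia.
have mid : D im.+1 * E im.+2 = D im * (Tc im * Tc im) * (Tc im.+1)^-1 * E im.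
  rewrite DS // ES // ES // tim invrM ?unitrV ?unitrMl // invrK invrM //.
  rewrite !mulrA braid_inv //.
  apply: hbr => //; lia.
have EC : forall k, (k <= im)%N -> E k * Tc im.+1 = Tc im.+1 * E k.
  elim=> [|k IH] hk; first by rewrite /E big_geq // mul1r mulr1.
  case: k IH hk => [|k] IH hk; first by rewrite E1 mul1r mulr1.
  rewrite ES // -mulrA IH; last by lia.
  rewrite !mulrA hcomm //; lia.
have X1C : Xc 1%N * Tc im.+1 = Tc im.+1 * Xc 1%N.
  by symmetry; apply: hTXc => //; lia.
have X1' : X 1%N = D im * (Tc im * Tc im) * E im * Xc 1%N.
  rewrite X1.
  have e1 : (im.+1 + (r - im.+1) = r)%N by lia.
  have e2 : (im.+2 + (r - im.+1) = r.+1)%N by lia.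
  have L := loop (r - im.+1)%N.
  rewrite e1 e2 in L; rewrite L //.
  rewrite mid -!mulrA; congr (_ * (_ * _)).
  by rewrite X1C [E im * (_ * _)]mulrA EC // -mulrA mulKr.
Show.
set Z := fun j => \prod_(j <= i < im) (Tc i)^-1 * (Tc im * Tc im) *
   \prod_(j <= k < im) Tc (im + j - 1 - k)%N * Xc j.
have Z1 : X 1%N = Z 1%N.
  rewrite X1' /Z /D /E; congr (_ * _ * _ * _).
    by apply: eq_big_nat => i /andP[_ hi]; rewrite tlt.
  by apply: eq_bigr => k _; rewrite addnK.
have Zstep : forall j, (1 <= j)%N -> (j < im)%N -> Z j.+1 = Tc j * Z j * Tc j.
  move=> j hj hjm.
  have U : Tc j \is a GRing.unit by apply: TU; lia.
  rewrite /Z (big_ltn hjm) (rev_step Tc j im hjm) -(hTX j); last by lia.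
  by rewrite !mulrA mulrV // mul1r.
have XZ : forall j, (1 <= j <= im)%N -> X j = Z j.
  elim=> [//|j IH] /andP[h1 h2].
  case: j IH h1 h2 => [|j] IH _ h2; first exact: Z1.
  rewrite XS // tlt; last by lia.
  rewrite IH; last by lia.
  rewrite (Zstep j.+1) //; lia.
have Wstep : forall j, (1 <= j)%N -> (j < im)%N ->
    Wword im Tc j = (Tc j)^-1 * Wword im Tc j.+1 * (Tc j)^-1.
  move=> j hj hjm.
  have RS := rev_step (fun k => (Tc k)^-1) j im hjm; simpl in RS.
  by rewrite /Wword (big_ltn hjm) RS !mulrA.
set Tg := fun j => Xc j + c * Xc im.+1 * Wword im Tc j.
have Tstep : forall j, (1 <= j)%N -> (j < im)%N -> Tg j.+1 = Tc j * Tg j * Tc j.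
  move=> j hj hjm.
  have U : Tc j \is a GRing.unit by apply: TU; lia.
  have TXm : Tc j * Xc im.+1 = Xc im.+1 * Tc j by apply: hTXc => //; lia.
  rewrite /Tg mulrDr mulrDl hTX; last by lia.
  congr (_ + _).
  rewrite (Wstep j) // !mulrA -(Cc (Tc j)) -[c * Tc j * Xc im.+1]mulrA TXm mulrA.
  by rewrite mulrK // divrK.
have Tm : Tg im = Z im.
  have hX1 : Tc im * Xc im * Tc im = Xc im.+1 by apply: hTX; lia.
  rewrite /Tg /Z /Wword !big_geq // !mul1r !mulr1 (Tq im); last by lia.
  rewrite mulrDl mul1r; congr (_ + _).
  by rewrite -hX1 !mulrA mulrK.
have TZ : forall d, (d < im)%N -> Tg (im - d)%N = Z (im - d)%N.
  elim=> [|d IH] hd; first by rewrite subn0 Tm.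
  have e : (im - d = (im - d.+1).+1)%N by lia.
  have h := IH (ltnW hd).
  rewrite e Tstep ?Zstep in h; try lia.
  have U : Tc (im - d.+1)%N \is a GRing.unit by apply: TU; lia.
  apply: (mulIr U); apply: (mulrI U).
  by rewrite mulrA [RHS]mulrA.
split.
  move=> j /andP[h1 h2].
  transitivity (Tg j); last by [].
  have h := TZ (im - j)%N.
  rewrite subKn // in h.
  rewrite XZ ?h1 ?h2 // h //; lia.
have Xim1 : X im.+1 = Xc im.+2.
  have hX1 : Tc im * Xc im * Tc im = Xc im.+1 by apply: hTX; lia.
  have hX2 : Tc im.+1 * Xc im.+1 * Tc im.+1 = Xc im.+2 by apply: hTX; lia.
  have TX2 : Tc im * Xc im.+2 = Xc im.+2 * Tc im by apply: hTXc => //; lia.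
  rewrite XS // tim XZ; last by lia.
  rewrite /Z !big_geq // mul1r mulr1.
  rewrite -(mulrK UA (Xc im.+2)) -TX2 -hX2 -hX1 !mulrA divrK //.
have Xgt : forall d, (im.+1 + d <= r)%N -> X (im.+1 + d)%N = Xc (im.+2 + d)%N.
  elim=> [|d IH] hd; first by rewrite !addn0 Xim1.
  rewrite addnS XS // tgt; last by lia.
  rewrite IH; last by lia.
  rewrite -addSn addnS hTX //; lia.
move=> j /andP[h1 h2].
have e1 : (im.+1 + (j - im.+1) = j)%N by lia.
have e2 : (im.+2 + (j - im.+1) = j.+1)%N by lia.
have := Xgt (j - im.+1)%N; rewrite e1 e2 => -> //.
Qed.
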